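(* Let $B(\xi)=\sum_{n=0}^{\infty} c_n \xi^n$ be the power series expansion at $\xi=0$ of the function $B(\xi) = W\!\left(\frac{\xi^2-2}{2e}\right)$, where the branches of the Lambert $W$ function are chosen so that $B$ is analytic on the disc $|\xi|<\sqrt{2}$ with $B(0)=-1$ and $B'(0)=1$ (so $c_0=-1$, $c_1=1$, $c_2=-\tfrac13$, $c_3=\tfrac{11}{72}$, $c_4=-\tfrac{43}{540},\dots$). Then for all $n\ge 0$, $|c_n| < 2\cdot (4/5)^n$, and also $|c_n|\le 1$.
   Context: The Lambert $W$ function is the (multivalued) inverse of $w\mapsto we^w$, i.e. $W(z)e^{W(z)}=z$. Equivalently, $B$ is the unique function analytic on $|\xi|<\sqrt2$ satisfying $B(\xi)e^{B(\xi)} = (\xi^2-2)/(2e)$ with $B(0)=-1$, $B'(0)=1$. In terms of the standard branches $W_k$, $B(\xi)=W_k((\xi^2-2)/(2e))$ with $k=0$ if $-\pi/2<\arg\xi\le\pi/2$, and $k=\pm1$ otherwise. *)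

(* Defs.v *)
From Stdlib Require Import Reals Lra.
From Coquelicot Require Export Coquelicot.
Open Scope R_scope.

Definition pser_sum (c : nat -> R) (x : R) : R := PSeries c x.

Definition is_B_coeffs (c : nat -> R) : Prop :=
  (forall x : R, Rabs x < sqrt 2 -> ex_pseries c x) /\
  (forall x : R, Rabs x < sqrt 2 ->
     pser_sum c x * exp (pser_sum c x) = (x ^ 2 - 2) / (2 * exp 1)) /\
  pser_sum c 0 = -1 /\
  Derive (pser_sum c) 0 = 1.

(* Main.v *)
Require Import Defs.
From Stdlib Require Import Reals.
From Coquelicot Require Import Coquelicot.
From Stdlib Require Import Lra Lia Factorial.
Open Scope R_scope.

Lemma rad_ge (a : nat -> R) (rho : R) :
  (forall x, Rabs x < rho -> ex_pseries a x) -> Rbar_le rho (CV_radius a).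
Proof.
  intros H.
  assert (Hin : forall x, 0 <= x < rho -> Rbar_le x (CV_radius a)).
  { intros x Hx. destruct (CV_radius_bounded a) as [Hub _].
    apply Hub.
    assert (He : ex_pseries a x) by (apply H; rewrite Rabs_pos_eq; lra).
    apply ex_pseries_R, ex_series_lim_0 in He.
    destruct (filterlim_bounded (V := R_NormedModule) (fun n => a n * x ^ n)) as [M HM].
    { exists 0. exact He. }
    exists M. intros n. exact (HM n). }
  assert (H0 := CV_radius_ge_0 a).
  destruct (CV_radius a) as [r| |] eqn:E; simpl in *; try tauto.
  destruct (Rle_dec rho r) as [|Hn]; [auto|].
  exfalso. assert (Hx := Hin (Rmax 0 ((r + rho)/2))).
  simpl in Hx. unfold Rmax in Hx. destruct (Rle_dec 0 ((r+rho)/2)); 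
  [assert (Hy : (r+rho)/2 <= r) by (apply Hx; lra); lra|].
  lra.
Qed.

Lemma loc_R (x : R) (P : R -> Prop) :
  locally x P -> exists d, 0 < d /\ forall y, Rabs (y - x) < d -> P y.
Proof.
  intros [eps H]. exists eps. split; [apply cond_pos|].
  intros y Hy. apply H. exact Hy.
Qed.

Lemma R_loc (x : R) (P : R -> Prop) d :
  0 < d -> (forall y, Rabs (y - x) < d -> P y) -> locally x P.
Proof.
  intros Hd H. exists (mkposreal d Hd). intros y Hy. apply H. exact Hy.
Qed.

Lemma cont_R (f : R -> R) x : continuity_pt f x ->
  forall eps, 0 < eps -> exists d, 0 < d /\ forall y, Rabs (y - x) < d -> Rabs (f y - f x) < eps.
Proof.
  intros Hc eps He. apply continuity_pt_locally with (eps := mkposreal eps He) in Hc.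
  apply loc_R in Hc. exact Hc.
Qed.

Lemma CV_radius_decr_n (a : nat -> R) k : CV_radius (PS_decr_n a k) = CV_radius a.
Proof.
  induction k as [|k IH].
  - apply CV_radius_ext. intros n. reflexivity.
  - rewrite <- IH. rewrite <- (CV_radius_decr_1 (PS_decr_n a k)).
    apply CV_radius_ext. intros n. unfold PS_decr_1, PS_decr_n. f_equal. lia.
Qed.

Lemma pow_le1 x m : 0 <= x <= 1 -> x ^ m <= 1.
Proof.
  intros Hx. induction m as [|m IH]; simpl; [lra|].
  assert (0 <= x ^ m) by (apply pow_le; lra). nra.
Qed.

Lemma coef_o (e : nat -> R) (n : nat) :
  Rbar_lt 0 (CV_radius e) ->
  (exists d C, 0 < d /\ forall x, 0 < Rabs x < d -> Rabs (PSeries e x) <= C * Rabs x ^ (S n)) ->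
  forall k, (k <= n)%nat -> e k = 0.
Proof.
  intros Hr [d [C [Hd HC]]].
  induction k as [k IH] using (well_founded_induction Wf_nat.lt_wf).
  intros Hk.
  assert (Hdec : forall x, PSeries e x = x ^ k * PSeries (PS_decr_n e k) x).
  { intros x. apply PSeries_decr_n_aux. intros i Hi. apply IH; lia. }
  assert (Hc : continuity_pt (PSeries (PS_decr_n e k)) 0).
  { apply PSeries_continuity. rewrite CV_radius_decr_n, Rabs_R0. exact Hr. }
  destruct (Req_dec (e k) 0) as [|Hne]; [assumption|exfalso].
  assert (Hek : 0 < Rabs (e k)) by (apply Rabs_pos_lt; exact Hne).
  pose proof (cont_R _ _ Hc (Rabs (e k) / 2)) as [eta [Heta Hcont]]; [lra|].
  rewrite PSeries_0 in Hcont. replace (PS_decr_n e k 0) with (e k) in Hcont by (unfold PS_decr_n; f_equal; lia).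
  set (x := Rmin (Rmin d eta) (Rmin 1 (Rabs (e k) / (2 * (Rabs C + 1)))) / 2).
  assert (HC1 : 0 < 2 * (Rabs C + 1)) by (pose proof (Rabs_pos C); lra).
  assert (Hq : 0 < Rabs (e k) / (2 * (Rabs C + 1))) by (apply Rdiv_lt_0_compat; lra).
  assert (Hx0 : 0 < x).
  { unfold x. repeat apply Rmin_case; lra. }
  assert (Hxd : x < d) by (unfold x; pose proof (Rmin_l (Rmin d eta) (Rmin 1 (Rabs (e k) / (2 * (Rabs C + 1))))); pose proof (Rmin_l d eta); lra).
  assert (Hxe : x < eta) by (unfold x; pose proof (Rmin_l (Rmin d eta) (Rmin 1 (Rabs (e k) / (2 * (Rabs C + 1))))); pose proof (Rmin_r d eta); lra).
  assert (Hx1 : x <= 1) by (unfold x; pose proof (Rmin_r (Rmin d eta) (Rmin 1 (Rabs (e k) / (2 * (Rabs C + 1))))); pose proof (Rmin_l 1 (Rabs (e k) / (2 * (Rabs C + 1)))); lra).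
  assert (Hxq : x <= Rabs (e k) / (2 * (Rabs C + 1))) by (unfold x; pose proof (Rmin_r (Rmin d eta) (Rmin 1 (Rabs (e k) / (2 * (Rabs C + 1))))); pose proof (Rmin_r 1 (Rabs (e k) / (2 * (Rabs C + 1)))); lra).
  clearbody x.
  assert (Hax : Rabs x = x) by (apply Rabs_pos_eq; lra).
  specialize (HC x). rewrite Hax, Hdec in HC. specialize (HC (conj Hx0 Hxd)).
  specialize (Hcont x). rewrite Rminus_0_r, Hax in Hcont. specialize (Hcont Hxe).
  set (g := PSeries (PS_decr_n e k) x) in *.
  rewrite Rabs_mult, <- RPow_abs, Hax in HC.
  assert (Hg : Rabs (e k) / 2 < Rabs g).
  { pose proof (Rabs_triang_inv (e k) (e k - g)). 
    replace (e k - (e k - g)) with g in H by ring.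
    rewrite Rabs_minus_sym in Hcont. lra. }
  assert (Hxk : 0 < x ^ k) by (apply pow_lt; lra).
  assert (Hpow : x ^ S n <= x ^ k * x).
  { replace (S n) with (k + S (n - k))%nat by lia. rewrite pow_add.
    apply Rmult_le_compat_l; [lra|].
    assert (x ^ (n - k) <= 1) by (apply pow_le1; lra).
    rewrite <- tech_pow_Rmult. nra. }
  assert (HgC : Rabs g <= Rabs C * x).
  { assert (Hm : x ^ k * Rabs g <= x ^ k * (C * x)).
    { eapply Rle_trans; [exact HC|]. 
      replace (x ^ k * (C * x)) with (C * (x ^ k * x)) by ring.
      destruct (Rle_dec 0 C).
      - apply Rmult_le_compat_l; assumption.
      - pose proof (pow_lt x (S n) Hx0). nra. }
    apply Rmult_le_reg_l in Hm; [|exact Hxk].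
    pose proof (Rle_abs C). nra. }
  assert (Rabs C * x <= Rabs C * (Rabs (e k) / (2 * (Rabs C + 1)))).
  { apply Rmult_le_compat_l; [apply Rabs_pos|exact Hxq]. }
  assert (Rabs C * (Rabs (e k) / (2 * (Rabs C + 1))) < Rabs (e k) / 2).
  { unfold Rdiv. pose proof (Rabs_pos C).
    apply Rmult_lt_reg_r with (2 * (Rabs C + 1)); [lra|].
    field_simplify; [|lra]. nra. }
  lra.
Qed.

Definition mcoef (k : nat) : R :=
  2 * 2 ^ (k + 2) / INR (fact (k + 2)) - 2 * 2 ^ (k + 3) / INR (fact (k + 3))
  + 2 / INR (fact (k + 3)) - 1 / INR (fact (k + 1)).

Lemma pow2_ge k : INR k + 4 <= 2 ^ (k + 3).
Proof.
  induction k as [|k IH]; [simpl; lra|].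
  rewrite S_INR. replace (S k + 3)%nat with (S (k + 3)) by lia.
  rewrite <- tech_pow_Rmult. pose proof (pos_INR k). lra.
Qed.

Lemma mcoef_ge0 k : 0 <= mcoef k.
Proof.
  unfold mcoef.
  replace (k + 3)%nat with (S (S (S k))) by lia.
  replace (k + 2)%nat with (S (S k)) by lia.
  replace (k + 1)%nat with (S k) by lia.
  assert (Hf : 0 < INR (fact k)) by (apply lt_0_INR, lt_O_fact).
  pose proof (pow2_ge k) as H2. replace (k + 3)%nat with (S (S (S k))) in H2 by lia.
  rewrite !fact_simpl, !mult_INR, !S_INR.
  simpl pow. simpl pow in H2.
  assert (0 <= INR k) by apply pos_INR.
  set (f := INR (fact k)) in *. set (p := 2 ^ k) in *. set (r := INR k) in *.
  assert (Hp : 0 < p) by (unfold p; apply pow_lt; lra).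
  apply Rmult_le_reg_r with ((r+1+1+1)*((r+1+1)*((r+1)*f))); [apply Rmult_lt_0_compat; [lra|]; apply Rmult_lt_0_compat; [lra|]; apply Rmult_lt_0_compat; lra|].
  rewrite Rmult_0_l. field_simplify; [|lra].
  assert (0 <= (r+1)*(8*p - r - 4)) by (apply Rmult_le_pos; lra). nra.
Qed.

Lemma exp_is_series x : is_series (fun k => / INR (fact k) * x ^ k) (exp x).
Proof.
  apply is_series_Reals. unfold exp. destruct (exist_exp x) as [l H]. simpl. exact H.
Qed.

Lemma is_series_tail (a : nat -> R) (L : R) n : (0 < n)%nat -> is_series a L ->
  is_series (fun k => a (n + k)%nat) (L - sum_f_R0 a (pred n)).
Proof.
  intros Hn H. apply is_series_incr_n; [exact Hn|].
  rewrite sum_n_Reals.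
  match goal with |- is_series _ ?X => replace X with L by (unfold plus; simpl; ring) end.
  exact H.
Qed.

Lemma M_series t : is_series (fun k => mcoef k * t ^ (k+3))
   (2*(t-1)*exp(2*t) + (2 - t^2)*exp t).
Proof.
  pose proof (is_series_tail _ _ 2 ltac:(lia) (exp_is_series (2*t))) as A.
  pose proof (is_series_tail _ _ 3 ltac:(lia) (exp_is_series (2*t))) as B.
  pose proof (is_series_tail _ _ 3 ltac:(lia) (exp_is_series t)) as C.
  pose proof (is_series_tail _ _ 1 ltac:(lia) (exp_is_series t)) as D.
  simpl pred in A, B, C, D. simpl sum_f_R0 in A, B, C, D.
  apply (is_series_scal (2 * t)) in A.
  apply (is_series_scal (-2)) in B.
  apply (is_series_scal 2) in C.
  apply (is_series_scal (- t^2)) in D.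
  pose proof (is_series_plus _ _ _ _ (is_series_plus _ _ _ _ A B) (is_series_plus _ _ _ _ C D)) as S.
  match type of S with is_series _ ?X =>
    replace X with (2*(t-1)*exp(2*t) + (2 - t^2)*exp t) in S
      by (unfold plus, scal; simpl; unfold mult; simpl; match goal with |- ?a = ?b => change (@eq R a b) end; field) end.
  revert S. apply is_series_ext.
  intros k. cbn -[fact INR pow Nat.add]. unfold mcoef.
  replace (2 + k)%nat with (S (S k)) by lia.
  replace (3 + k)%nat with (S (S (S k))) by lia.
  replace (1 + k)%nat with (S k) by lia.
  replace (k + 3)%nat with (S (S (S k))) by lia.
  replace (k + 2)%nat with (S (S k)) by lia.
  replace (k + 1)%nat with (S k) by lia.
  rewrite !Rpow_mult_distr.
 rewrite <- !tech_pow_Rmult. match goal with |- ?a = ?b => change (@eq R a b) end. rewrite !fact_simpl, !mult_INR, !S_INR. field. assert (0 < INR (fact k)) by (apply lt_0_INR, lt_O_fact). pose proof (pos_INR k). repeat split; lra.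
Qed.

Definition Mfun (t : R) := (2*(t-1)*exp(2*t) + (2 - t^2)*exp t) / t^3.

Lemma M_pseries t : t <> 0 -> is_pseries mcoef t (Mfun t).
Proof.
  intros Ht. apply is_pseries_R.
  pose proof (is_series_scal (/ t^3) _ _ (M_series t)) as H.
  assert (Ht3 : t ^ 3 <> 0) by (apply pow_nonzero; exact Ht).
  revert H. unfold Mfun. 
  match goal with |- is_series _ ?X -> _ => replace X with ((2*(t-1)*exp(2*t) + (2 - t^2)*exp t) / t^3) by (unfold scal; simpl; unfold mult; simpl; match goal with |- ?a = ?b => change (@eq R a b) end; field; exact Ht) end.
  apply is_series_ext. intros k. unfold scal; simpl; unfold mult; simpl.
  rewrite pow_add. field. exact Ht.
Qed.

Lemma ex_pseries_M t : ex_pseries mcoef t.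
Proof.
  destruct (Req_dec t 0) as [->|Ht].
  - apply (ex_pseries_0 (V := R_NormedModule)).
  - eexists. apply M_pseries. exact Ht.
Qed.

Lemma PSeries_M t : t <> 0 -> PSeries mcoef t = Mfun t.
Proof.
  intros Ht. unfold PSeries. apply is_series_unique. apply is_pseries_R. apply M_pseries. exact Ht.
Qed.

Lemma rad_M t : Rbar_lt (Rabs t) (CV_radius mcoef).
Proof.
  apply Rbar_lt_le_trans with (Rabs t + 1). simpl; lra.
  apply rad_ge. intros x _. apply ex_pseries_M.
Qed.

Lemma sum_nonneg (f : nat -> R) N : (forall i, (i <= N)%nat -> 0 <= f i) -> 0 <= sum_f_R0 f N.
Proof.
  induction N as [|N IH]; intros H; simpl.
  - apply H; lia.
  - pose proof (H (S N) ltac:(lia)). assert (0 <= sum_f_R0 f N) by (apply IH; intros; apply H; lia). lra.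
Qed.

Definition delta (k : nat) : R := match k with O => 1 | S _ => 0 end.

Lemma ex_pseries_delta x : ex_pseries delta x.
Proof.
  apply ex_pseries_R. apply ex_series_incr_1.
  assert (H0 : ex_pseries (fun _ : nat => 0) x).
  { apply CV_radius_inside. rewrite CV_radius_const_0. simpl. exact I. }
  apply ex_pseries_R in H0. revert H0. apply ex_series_ext. intros n. simpl. ring.
Qed.

Lemma PSeries_delta x : PSeries delta x = 1.
Proof.
  rewrite PSeries_decr_1 by apply ex_pseries_delta.
  rewrite (PSeries_ext _ (fun _ => 0)) by (intros; reflexivity).
  rewrite PSeries_const_0. simpl. ring.
Qed.

Fixpoint pw (ya : nat -> R) (j : nat) : nat -> R :=
  match j with O => delta | S j => PS_mult ya (pw ya j) end.

Lemma pw_props (ya : nat -> R) (rho : R) : Rbar_le rho (CV_radius ya) ->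
  forall j, Rbar_le rho (CV_radius (pw ya j)) /\
     forall x, Rabs x < rho -> PSeries (pw ya j) x = PSeries ya x ^ j.
Proof.
  intros Hr j. induction j as [|j [IHr IHv]]; split.
  - apply rad_ge. intros x _. apply ex_pseries_delta.
  - intros x _. simpl. apply PSeries_delta.
  - apply rad_ge. intros x Hx. simpl. apply ex_pseries_mult.
    + apply Rbar_lt_le_trans with rho; [exact Hx|exact Hr].
    + apply Rbar_lt_le_trans with rho; [exact Hx|exact IHr].
  - intros x Hx. simpl. rewrite PSeries_mult.
    + rewrite IHv by exact Hx. ring.
    + apply Rbar_lt_le_trans with rho; [exact Hx|exact Hr].
    + apply Rbar_lt_le_trans with rho; [exact Hx|exact IHr].
Qed.

Lemma pw_nonneg (ya : nat -> R) n : (forall k, (k <= n)%nat -> 0 <= ya k) ->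
  forall j k, (k <= n)%nat -> 0 <= pw ya j k.
Proof.
  intros H j. induction j as [|j IH]; intros k Hk; simpl.
  - destruct k; simpl; lra.
  - unfold PS_mult. apply sum_nonneg. intros i Hi.
    apply Rmult_le_pos; [apply H; lia|apply IH; lia].
Qed.

Lemma PSeries_finsum (F : nat -> nat -> R) N x :
  (forall j, ex_pseries (F j) x) ->
  ex_pseries (fun k => sum_f_R0 (fun j => F j k) N) x /\
  PSeries (fun k => sum_f_R0 (fun j => F j k) N) x = sum_f_R0 (fun j => PSeries (F j) x) N.
Proof.
  intros HF. induction N as [|N [IHe IHv]]; simpl.
  - split; [apply HF|]. apply PSeries_ext. intros; reflexivity.
  - split.
    + apply (ex_pseries_ext (PS_plus (fun k => sum_f_R0 (fun j => F j k) N) (F (S N)))).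
      { intros n. reflexivity. }
      apply ex_pseries_plus; [exact IHe|apply HF].
    + rewrite <- IHv. rewrite <- PSeries_plus; [|exact IHe|apply HF].
      apply PSeries_ext. intros n. reflexivity.
Qed.

Lemma cont_bound (f : R -> R) : continuity_pt f 0 ->
  exists d K, 0 < d /\ forall y, Rabs y < d -> Rabs (f y) <= K.
Proof.
  intros Hc. destruct (cont_R f 0 Hc 1 ltac:(lra)) as [d [Hd H]].
  exists d, (Rabs (f 0) + 1). split; [exact Hd|].
  intros y Hy. specialize (H y). rewrite Rminus_0_r in H. specialize (H Hy).
  pose proof (Rabs_triang_inv (f y) (f 0)). lra.
Qed.

Lemma pos_step (ya : nat -> R) (rho : R) (n : nat) :
  0 < rho -> Rbar_le rho (CV_radius ya) -> ya O = 0 ->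
  (forall x, 0 < Rabs x < rho ->
     PSeries (PS_derive (PS_derive ya)) x = PSeries mcoef (PSeries ya x)) ->
  (forall k, (k <= n)%nat -> 0 <= ya k) -> 0 <= ya (S (S n)).
Proof.
  intros Hrho Hr Hy0 Hode Hpos.
  set (d := PS_derive (PS_derive ya)).
  set (Q := fun k => sum_f_R0 (fun j => mcoef j * pw ya j k) n).
  set (e := fun k => d k - Q k).
  assert (Hlt : forall x, Rabs x < rho -> Rbar_lt (Rabs x) (CV_radius ya)).
  { intros x Hx. apply Rbar_lt_le_trans with rho; [exact Hx|exact Hr]. }
  assert (Hpw := pw_props ya rho Hr).
  assert (HQ : forall x, Rabs x < rho -> ex_pseries Q x /\
            PSeries Q x = sum_f_R0 (fun j => mcoef j * PSeries ya x ^ j) n).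
  { intros x Hx.
    destruct (PSeries_finsum (fun j k => mcoef j * pw ya j k) n x) as [H1 H2].
    { intros j. apply (ex_pseries_ext (PS_scal (mcoef j) (pw ya j))); [intros; reflexivity|].
      apply ex_pseries_scal; [unfold mult; simpl; ring|].
      apply CV_radius_inside. apply Rbar_lt_le_trans with rho; [exact Hx|apply Hpw]. }
    split; [exact H1|]. unfold Q. rewrite H2. apply sum_eq. intros j _.
    rewrite (PSeries_ext _ (PS_scal (mcoef j) (pw ya j))) by (intros; reflexivity).
    rewrite PSeries_scal. f_equal. apply Hpw. exact Hx. }
  assert (Hd : forall x, Rabs x < rho -> ex_pseries d x).
  { intros x Hx. apply ex_pseries_derive. rewrite CV_radius_derive. apply Hlt, Hx. }
  assert (He : forall x, Rabs x < rho -> ex_pseries e x /\ PSeries e x = PSeries d x - PSeries Q x).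
  { intros x Hx. destruct (HQ x Hx) as [HQe HQv].
    split.
    - apply (ex_pseries_ext (PS_plus d (PS_scal (-1) Q))).
      { intros k. unfold PS_plus, PS_scal, e. simpl. unfold plus, scal; simpl. unfold mult; simpl. ring. }
      apply ex_pseries_plus; [apply Hd, Hx|]. apply ex_pseries_scal; [unfold mult; simpl; ring|exact HQe].
    - rewrite (PSeries_ext _ (PS_plus d (PS_scal (-1) Q))).
      + rewrite PSeries_plus; [|apply Hd, Hx|apply ex_pseries_scal; [unfold mult; simpl; ring|exact HQe]].
        rewrite PSeries_scal. ring.
      + intros k. unfold PS_plus, PS_scal, e. simpl. unfold plus, scal; simpl. unfold mult; simpl. ring. }
  assert (Hbig : exists dd C, 0 < dd /\ forall x, 0 < Rabs x < dd -> Rabs (PSeries e x) <= C * Rabs x ^ (S n)).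
  { destruct (cont_bound (PSeries (PS_decr_n mcoef (S n)))) as [eta [K [Heta HK]]].
    { apply PSeries_continuity. rewrite CV_radius_decr_n. apply rad_M. }
    destruct (cont_bound (PSeries (PS_decr_1 ya))) as [eta' [K' [Heta' HK']]].
    { apply PSeries_continuity. rewrite CV_radius_decr_1. apply Hlt. rewrite Rabs_R0. exact Hrho. }
    assert (HK'0 : 0 <= K') by (pose proof (HK' 0 ltac:(rewrite Rabs_R0; lra)); pose proof (Rabs_pos (PSeries (PS_decr_1 ya) 0)); lra).
    exists (Rmin rho (Rmin eta' (eta / (K' + 1)))), (K * K' ^ (S n)).
    split.
    { repeat apply Rmin_case; try lra. apply Rdiv_lt_0_compat; lra. }
    intros x [Hx0 Hx].
    assert (Hxr : Rabs x < rho) by (eapply Rlt_le_trans; [exact Hx|apply Rmin_l]).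
    assert (Hxe' : Rabs x < eta') by (eapply Rlt_le_trans; [exact Hx|]; eapply Rle_trans; [apply Rmin_r|apply Rmin_l]).
    assert (Hxe : Rabs x < eta / (K' + 1)) by (eapply Rlt_le_trans; [exact Hx|]; eapply Rle_trans; [apply Rmin_r|apply Rmin_r]).
    set (y := PSeries ya x).
    assert (Hyx : y = x * PSeries (PS_decr_1 ya) x).
    { unfold y. rewrite PSeries_decr_1; [rewrite Hy0; ring|]. apply CV_radius_inside, Hlt, Hxr. }
    assert (Hyb : Rabs y <= K' * Rabs x).
    { rewrite Hyx, Rabs_mult. specialize (HK' x Hxe'). rewrite Rmult_comm. apply Rmult_le_compat_r; [apply Rabs_pos|exact HK']. }
    assert (Hye : Rabs y < eta).
    { apply Rle_lt_trans with (K' * Rabs x); [exact Hyb|].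
      apply Rmult_lt_compat_l with (r := K' + 1) in Hxe; [|lra].
      replace ((K' + 1) * (eta / (K' + 1))) with eta in Hxe by (field; lra).
      pose proof (Rabs_pos x). nra. }
    destruct (He x Hxr) as [_ Hev]. rewrite Hev.
    unfold d. rewrite Hode by (split; assumption). fold y.
    rewrite (PSeries_decr_n mcoef n y (ex_pseries_M y)).
    destruct (HQ x Hxr) as [_ HQv]. rewrite HQv. fold y.
    replace (sum_f_R0 (fun k : nat => mcoef k * y ^ k) n + y ^ S n * PSeries (PS_decr_n mcoef (S n)) y -
      sum_f_R0 (fun j : nat => mcoef j * y ^ j) n) with (y ^ S n * PSeries (PS_decr_n mcoef (S n)) y) by ring.
    rewrite Rabs_mult, <- RPow_abs.
    specialize (HK y Hye).
    assert (HK0 : 0 <= K) by (pose proof (Rabs_pos (PSeries (PS_decr_n mcoef (S n)) y)); lra).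
    assert (Rabs y ^ S n <= (K' * Rabs x) ^ S n) by (apply pow_incr; split; [apply Rabs_pos|exact Hyb]).
    rewrite Rpow_mult_distr in H.
    rewrite (Rmult_comm K), Rmult_assoc.
    assert (0 <= Rabs y ^ S n) by (apply pow_le, Rabs_pos).
    apply Rle_trans with (Rabs y ^ S n * K).
    - apply Rmult_le_compat_l; assumption.
    - match goal with |- ?a <= ?b => replace b with ((K' ^ S n * Rabs x ^ S n) * K) by ring end.
      apply Rmult_le_compat_r; [exact HK0|]. lra. }
  assert (Hre : Rbar_lt 0 (CV_radius e)).
  { apply Rbar_lt_le_trans with rho; [simpl; exact Hrho|]. apply rad_ge. intros x Hx. apply He, Hx. }
  pose proof (coef_o e n Hre Hbig n (le_n n)) as Hen.
  unfold e in Hen.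
  assert (HQn : 0 <= Q n).
  { unfold Q. apply sum_nonneg. intros j _. apply Rmult_le_pos; [apply mcoef_ge0|].
    apply (pw_nonneg ya n Hpos); lia. }
  unfold d, PS_derive in Hen.
  assert (H1 : 0 < INR (S n)) by (apply lt_0_INR; lia).
  assert (H2 : 0 < INR (S (S n))) by (apply lt_0_INR; lia).
  assert (0 <= INR (S n) * (INR (S (S n)) * ya (S (S n)))) by lra.
  apply Rmult_le_reg_l with (INR (S n) * INR (S (S n))); [apply Rmult_lt_0_compat; assumption|].
  rewrite Rmult_0_r, Rmult_assoc. exact H.
Qed.

Ltac rring := match goal with |- ?a = ?b => change (@eq R a b) end;
  unfold Rminus; field.
Ltac rringP := match goal with |- ?a = ?b => change (@eq R a b) end;
  unfold Rminus;
  repeat match goal with |- context [fun y : R => PSeries ?b y] => change (fun y : R => PSeries b y) with (PSeries b) end;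
  field.

Definition acoef (c : nat -> R) (n : nat) : R := - (-1) ^ n * c n.

Lemma deriv_eq (f g : R -> R) x0 r lf lg : 0 < r ->
  (forall x, Rabs (x - x0) < r -> f x = g x) -> is_derive f x0 lf -> is_derive g x0 lg -> lf = lg.
Proof.
  intros Hr Heq Hf Hg.
  apply (is_derive_ext_loc f g) in Hf; [|exact (R_loc x0 _ r Hr Heq)].
  apply is_derive_unique in Hf. apply is_derive_unique in Hg. congruence.
Qed.

Lemma radc c : is_B_coeffs c -> Rbar_le (sqrt 2) (CV_radius c).
Proof. intros [H _]. apply rad_ge. exact H. Qed.

Lemma T_eq c x : PSeries (acoef c) x = - PSeries c (-x).
Proof.
  unfold PSeries. rewrite <- Series_opp. apply Series_ext. intros k.
  unfold acoef. replace (-x) with ((-1) * x) by ring. rewrite Rpow_mult_distr. ring.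
Qed.

Lemma rada c : is_B_coeffs c -> Rbar_le (sqrt 2) (CV_radius (acoef c)).
Proof.
  intros [H _]. apply rad_ge. intros x Hx.
  assert (H' : ex_pseries c (-x)) by (apply H; rewrite Rabs_Ropp; exact Hx).
  apply ex_pseries_R in H'. apply ex_pseries_R.
  apply ex_series_opp in H'. revert H'. apply ex_series_ext. intros k.
  unfold acoef, opp; simpl. replace (-x) with ((-1) * x) by ring. rewrite Rpow_mult_distr. ring.
Qed.

Lemma F4 c : is_B_coeffs c -> forall x, Rabs x < sqrt 2 ->
  PSeries (acoef c) x * exp (1 - PSeries (acoef c) x) = 1 - x ^ 2 / 2.
Proof.
  intros Hc x Hx. destruct Hc as [_ [H _]].
  assert (Hx' : Rabs (-x) < sqrt 2) by (rewrite Rabs_Ropp; exact Hx).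
  specialize (H (-x) Hx'). unfold pser_sum in H. rewrite T_eq.
  set (B := PSeries c (-x)) in *.
  replace (1 - - B) with (1 + B) by ring. rewrite exp_plus.
  assert (He : 0 < exp 1) by apply exp_pos.
  replace (- B * (exp 1 * exp B)) with (- exp 1 * (B * exp B)) by ring.
  rewrite H. field. lra.
Qed.

Lemma a0 c : is_B_coeffs c -> acoef c 0 = 1.
Proof.
  intros [_ [_ [H _]]]. unfold pser_sum in H. rewrite PSeries_0 in H. unfold acoef. rewrite H. simpl. ring.
Qed.

Lemma a1 c : is_B_coeffs c -> acoef c 1 = 1.
Proof.
  intros Hc. pose proof (radc c Hc) as Hr. destruct Hc as [_ [_ [_ H]]]. unfold pser_sum in H.
  rewrite Derive_PSeries in H.
  - rewrite PSeries_0 in H. unfold PS_derive in H. unfold acoef. simpl in *. lra.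
  - rewrite Rabs_R0. apply Rbar_lt_le_trans with (sqrt 2); [simpl; apply sqrt_lt_R0; lra|exact Hr].
Qed.

Section ODE.
Variable c : nat -> R.
Hypothesis Hc : is_B_coeffs c.
Let a := acoef c.
Let T := PSeries a.
Let T1 := PSeries (PS_derive a).
Let T2 := PSeries (PS_derive (PS_derive a)).

Lemma inrad x : Rabs x < sqrt 2 -> Rbar_lt (Rabs x) (CV_radius a).
Proof. intros Hx. apply Rbar_lt_le_trans with (sqrt 2); [exact Hx|apply rada, Hc]. Qed.

Lemma inrad1 x : Rabs x < sqrt 2 -> Rbar_lt (Rabs x) (CV_radius (PS_derive a)).
Proof. intros Hx. rewrite CV_radius_derive. apply inrad, Hx. Qed.

Lemma near x0 : Rabs x0 < sqrt 2 -> 0 < sqrt 2 - Rabs x0 /\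
  forall x, Rabs (x - x0) < sqrt 2 - Rabs x0 -> Rabs x < sqrt 2.
Proof.
  intros H. split; [lra|]. intros x Hx.
  pose proof (Rabs_triang (x - x0) x0). replace (x - x0 + x0) with x in H0 by ring. lra.
Qed.

Lemma D1 x : Rabs x < sqrt 2 -> (T x - 1) * T1 x = x * exp (T x - 1).
Proof.
  intros Hx. destruct (near x Hx) as [Hr Hn].
  assert (Hd : is_derive (fun x => T x * exp (1 - T x)) x
     (T1 x * exp (1 - T x) - T x * exp (1 - T x) * T1 x)).
  { unfold T, T1. rewrite <- Derive_PSeries by (apply inrad, Hx).
    auto_derive; [repeat split; apply ex_derive_PSeries, inrad, Hx|]. rringP. }
  assert (Hg : is_derive (fun x : R => 1 - x ^ 2 / 2) x (- x)).
  { auto_derive; [exact I|]. rring. }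
  pose proof (deriv_eq _ _ x _ _ _ Hr (fun y Hy => F4 c Hc y (Hn y Hy)) Hd Hg) as E.
  assert (HE : exp (1 - T x) * exp (T x - 1) = 1).
  { rewrite <- exp_plus. replace (1 - T x + (T x - 1)) with 0 by ring. apply exp_0. }
  replace ((T x - 1) * T1 x) with (- (T1 x * exp (1 - T x) - T x * exp (1 - T x) * T1 x) * exp (T x - 1)).
  - rewrite E. ring.
  - replace (- (T1 x * exp (1 - T x) - T x * exp (1 - T x) * T1 x) * exp (T x - 1))
      with ((T x - 1) * T1 x * (exp (1 - T x) * exp (T x - 1))) by ring.
    rewrite HE. ring.
Qed.

Lemma D2 x : Rabs x < sqrt 2 -> T1 x ^ 2 + (T x - 1) * T2 x = exp (T x - 1) * (1 + x * T1 x).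
Proof.
  intros Hx. destruct (near x Hx) as [Hr Hn].
  assert (Hd : is_derive (fun x => (T x - 1) * T1 x) x (Derive T x * T1 x + (T x - 1) * Derive T1 x)).
  { unfold T, T1. auto_derive; [repeat split; [apply ex_derive_PSeries, inrad, Hx|apply ex_derive_PSeries, inrad1, Hx]|].
    rringP. }
  unfold T, T1 in Hd. rewrite (Derive_PSeries a x) in Hd by (apply inrad, Hx).
  rewrite (Derive_PSeries (PS_derive a) x) in Hd by (apply inrad1, Hx).
  replace (PSeries (PS_derive a) x * PSeries (PS_derive a) x) with (T1 x ^ 2) in Hd by (unfold T1; ring).
  assert (Hg : is_derive (fun x => x * exp (T x - 1)) x (exp (T x - 1) * (1 + x * T1 x))).
  { unfold T, T1. rewrite <- Derive_PSeries by (apply inrad, Hx).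
    auto_derive; [repeat split; apply ex_derive_PSeries, inrad, Hx|rringP]. }
  exact (deriv_eq _ _ x _ _ _ Hr (fun y Hy => D1 y (Hn y Hy)) Hd Hg).
Qed.


Lemma Tne1 x : 0 < Rabs x < sqrt 2 -> T x - 1 <> 0.
Proof.
  intros [H0 Hx] E. pose proof (D1 x Hx) as H. rewrite E, exp_0 in H.
  assert (x = 0) by lra. subst. rewrite Rabs_R0 in H0. lra.
Qed.

Lemma D4 x : 0 < Rabs x < sqrt 2 -> T2 x = PSeries mcoef (T x - 1).
Proof.
  intros Hx. pose proof (Tne1 x Hx) as Hs. destruct Hx as [_ Hx].
  rewrite PSeries_M by exact Hs. unfold Mfun.
  pose proof (D1 x Hx) as H1. pose proof (D2 x Hx) as H2. pose proof (F4 c Hc x Hx) as H3.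
  fold a in H3. fold T in H3.
  set (s := T x - 1) in *. set (E := exp s).
  assert (HE : 0 < E) by apply exp_pos.
  assert (Hm : exp (1 - T x) = / E).
  { unfold E, s. rewrite <- exp_Ropp. f_equal. ring. }
  assert (H2s : exp (2 * s) = E * E).
  { unfold E. rewrite <- exp_plus. f_equal. ring. }
  rewrite H2s. fold E in H1, H2.
  rewrite Hm in H3. replace (T x) with (1 + s) in H3 by (unfold s; ring).
  assert (Hx2 : x ^ 2 * E ^ 2 = 2 * E ^ 2 - 2 * (1 + s) * E).
  { assert (x ^ 2 = 2 - 2 * ((1 + s) * / E)) by lra.
    rewrite H. field. lra. }
  assert (H4 : s ^ 3 * T2 x = s ^ 2 * E + (s - 1) * (x ^ 2 * E ^ 2)).
  { replace (s ^ 3 * T2 x) with (s ^ 2 * (s * T2 x)) by ring.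
    replace (s * T2 x) with (E * (1 + x * T1 x) - T1 x ^ 2) by lra.
    replace (s ^ 2 * (E * (1 + x * T1 x) - T1 x ^ 2)) with
      (s ^ 2 * E + E * x * s * (s * T1 x) - (s * T1 x) ^ 2) by ring.
    rewrite H1. ring. }
  rewrite Hx2 in H4.
  apply (Rmult_eq_reg_l (s ^ 3)); [|apply pow_nonzero; exact Hs].
  rewrite H4. field. exact Hs.
Qed.

Definition ya (n : nat) : R := match n with O => 0 | S _ => a n end.

Lemma ya_T x : Rabs x < sqrt 2 -> PSeries ya x = T x - 1.
Proof.
  intros Hx. unfold T.
  assert (Hya : ex_pseries ya x).
  { apply ex_pseries_R, ex_series_incr_1.
    pose proof (CV_radius_inside a x (inrad x Hx)) as H.
    apply ex_pseries_R, ex_series_incr_1 in H. exact H. }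
  rewrite (PSeries_decr_1 ya x Hya), (PSeries_decr_1 a x (CV_radius_inside a x (inrad x Hx))).
  replace (a 0%nat) with 1 by (symmetry; apply a0, Hc).
  rewrite (PSeries_ext (PS_decr_1 ya) (PS_decr_1 a)) by (intros; reflexivity).
  simpl. ring.
Qed.

Lemma rad_ya : Rbar_le (sqrt 2) (CV_radius ya).
Proof.
  rewrite <- CV_radius_decr_1. rewrite (CV_radius_ext _ (PS_decr_1 a)) by (intros; reflexivity).
  rewrite CV_radius_decr_1. apply rada, Hc.
Qed.

Lemma ya_pos : forall m k, (k <= S m)%nat -> 0 <= ya k.
Proof.
  induction m as [|m IH]; intros k Hk.
  - destruct k as [|[|k]]; [simpl; lra| |lia]. simpl. unfold a. rewrite (a1 c Hc). lra.
  - destruct (Nat.le_gt_cases k (S m)) as [Hle|Hgt]; [apply IH, Hle|].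
    replace k with (S (S m)) by lia.
    apply (pos_step ya (sqrt 2) m).
    + apply sqrt_lt_R0. lra.
    + exact rad_ya.
    + reflexivity.
    + intros x Hx. rewrite ya_T by (apply Hx).
      rewrite (PSeries_ext _ (PS_derive (PS_derive a))) by (intros; reflexivity).
      apply D4. exact Hx.
    + intros k' Hk'. apply IH. lia.
Qed.

Lemma a_pos n : 0 <= a n.
Proof.
  destruct n as [|n].
  - unfold a. rewrite (a0 c Hc). lra.
  - exact (ya_pos n (S n) (le_n _)).
Qed.

Lemma sum_low (f : nat -> R) n : (forall k, 0 <= f k) -> (2 <= n)%nat ->
  f 0%nat + f 1%nat + f n <= sum_f_R0 f n.
Proof.
  intros Hf Hn. destruct n as [|n]; [lia|]. simpl sum_f_R0.
  assert (forall m, (1 <= m)%nat -> f 0%nat + f 1%nat <= sum_f_R0 f m).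
  { induction m as [|m IH]; intros Hm; [lia|].
    destruct m as [|m]; simpl; [lra|]. simpl in IH. pose proof (Hf (S (S m))).
    assert (f 0%nat + f 1%nat <= sum_f_R0 f (S m)) by (apply IH; lia). simpl in H0. lra. }
  assert (f 0%nat + f 1%nat <= sum_f_R0 f n) by (apply H; lia). lra.
Qed.

Lemma coef_bound r T0 : 0 < r < sqrt 2 -> 1 <= T0 -> T0 * exp (1 - T0) < 1 - r ^ 2 / 2 ->
  forall n, (2 <= n)%nat -> a n * r ^ n < T0 - 1 - r.
Proof.
  intros Hr HT0 Hexp n Hn.
  assert (Hrr : Rabs r < sqrt 2) by (rewrite Rabs_pos_eq; lra).
  assert (HTr : T r < T0).
  { destruct (Rlt_dec (T r) T0) as [|Hge]; [assumption|exfalso].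
    pose proof (F4 c Hc r Hrr) as H. fold a T in H.
    set (t := T r) in *.
    assert (E1 : exp (1 - T0) = exp (1 - t) * exp (t - T0)) by (rewrite <- exp_plus; f_equal; ring).
    pose proof (exp_ineq1_le (t - T0)).
    pose proof (exp_pos (1 - t)).
    assert (t * exp (1 - t) <= T0 * exp (1 - T0)).
    { rewrite E1. 
      assert (t <= T0 * exp (t - T0)) by nra. nra. }
    lra. }
  assert (Hsum : sum_f_R0 (fun k => a k * r ^ k) n <= T r).
  { unfold T. rewrite (PSeries_decr_n a n r (CV_radius_inside a r (inrad r Hrr))).
    assert (0 <= PSeries (PS_decr_n a (S n)) r).
    { unfold PSeries. 
      assert (Hz : Series (fun _ : nat => 0) = 0).
      { pose proof (PSeries_const_0 0) as Z. unfold PSeries in Z.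
        transitivity (Series (fun k : nat => 0 * 0 ^ k)); [|exact Z].
        apply Series_ext. intros k. rewrite Rmult_0_l. reflexivity. }
      rewrite <- Hz. apply Series_le.
      - intros k. split; [lra|]. apply Rmult_le_pos; [apply a_pos|apply pow_le; lra].
      - apply ex_pseries_R. apply CV_radius_inside. rewrite CV_radius_decr_n. apply inrad, Hrr. }
    assert (0 <= r ^ S n) by (apply pow_le; lra). nra. }
  pose proof (sum_low (fun k => a k * r ^ k) n) as Hl.
  simpl in Hl. unfold a in Hl. rewrite (a0 c Hc), (a1 c Hc) in Hl. fold a in Hl.
  assert (1 * 1 + 1 * (r * 1) + a n * r ^ n <= sum_f_R0 (fun k : nat => a k * r ^ k) n).
  { apply Hl; [|exact Hn]. intros k. apply Rmult_le_pos; [apply a_pos|apply pow_le; lra]. }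
  lra.
Qed.

End ODE.


Lemma exp_sq y : exp (2 * y) = exp y * exp y.
Proof. rewrite <- exp_plus. f_equal. ring. Qed.

Lemma e2_gt6 : 6 < exp 2.
Proof.
  pose proof (exp_ineq1_le (1/8)) as H1.
  assert (H2 : 81/64 <= exp (1/4)) by (replace (1/4) with (2 * (1/8)) by field; rewrite exp_sq; nra).
  assert (H3 : 16/10 <= exp (1/2)) by (replace (1/2) with (2 * (1/4)) by field; rewrite exp_sq; nra).
  assert (H4 : 256/100 <= exp 1) by (replace 1 with (2 * (1/2)) by field; rewrite exp_sq; nra).
  replace 2 with (2 * 1) by ring. rewrite exp_sq. nra.
Qed.

Lemma e134 : 136/7 < exp (13/4).
Proof.
  pose proof (exp_ineq1_le (13/128)) as H1.
  assert (H2 : 121/100 <= exp (13/64)) by (replace (13/64) with (2 * (13/128)) by field; rewrite exp_sq; nra).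
  assert (H3 : 146/100 <= exp (13/32)) by (replace (13/32) with (2 * (13/64)) by field; rewrite exp_sq; nra).
  assert (H4 : 213/100 <= exp (13/16)) by (replace (13/16) with (2 * (13/32)) by field; rewrite exp_sq; nra).
  assert (H5 : 453/100 <= exp (13/8)) by (replace (13/8) with (2 * (13/16)) by field; rewrite exp_sq; nra).
  replace (13/4) with (2 * (13/8)) by field; rewrite exp_sq; nra.
Qed.

Lemma sqrt2_gt : 5/4 < sqrt 2.
Proof.
  replace (5/4) with (sqrt ((5/4)^2)) by (rewrite sqrt_pow2; lra).
  apply sqrt_lt_1_alt. lra.
Qed.

Theorem theorem1 (c : nat -> R) (Hc : is_B_coeffs c) :
  forall n : nat, Rabs (c n) < 2 * (4 / 5) ^ n /\ Rabs (c n) <= 1.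
Proof.
  intros n.
  assert (Hcn : Rabs (c n) = acoef c n).
  { unfold acoef. rewrite <- (Rabs_pos_eq (- (-1) ^ n * c n)) by (apply a_pos, Hc).
    rewrite Rabs_mult, Rabs_Ropp, pow_1_abs. ring. }
  rewrite Hcn.
  destruct n as [|[|n]].
  - rewrite (a0 c Hc). simpl. lra.
  - rewrite (a1 c Hc). simpl. lra.
  - assert (Hn : (2 <= S (S n))%nat) by lia.
    split.
    + assert (Hexp : 17/4 * exp (1 - 17/4) < 1 - (5/4) ^ 2 / 2).
      { replace (1 - 17/4) with (- (13/4)) by field. rewrite exp_Ropp.
        pose proof e134. pose proof (exp_pos (13/4)).
        apply Rmult_lt_reg_r with (exp (13/4)); [lra|].
        field_simplify; [|lra]. lra. }
      assert (H := coef_bound c Hc (5/4) (17/4) ltac:(pose proof sqrt2_gt; lra) ltac:(lra) Hexp _ Hn).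
      assert (Hp : (5/4) ^ S (S n) * (4/5) ^ S (S n) = 1).
      { rewrite <- Rpow_mult_distr. replace (5/4 * (4/5)) with 1 by field. apply pow1. }
      assert (0 < (4/5) ^ S (S n)) by (apply pow_lt; lra).
      replace (acoef c (S (S n))) with (acoef c (S (S n)) * (5/4) ^ S (S n) * (4/5) ^ S (S n))
        by (rewrite Rmult_assoc, Hp; ring).
      apply Rmult_lt_compat_r; [assumption|]. lra.
    + assert (Hexp : 3 * exp (1 - 3) < 1 - 1 ^ 2 / 2).
      { replace (1 - 3) with (Ropp 2) by field. rewrite exp_Ropp.
        pose proof e2_gt6. pose proof (exp_pos 2).
        apply Rmult_lt_reg_r with (exp 2); [lra|].
        field_simplify; [|lra]. lra. }
      assert (H := coef_bound c Hc 1 3 ltac:(pose proof sqrt2_gt; lra) ltac:(lra) Hexp _ Hn).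
      rewrite pow1, Rmult_1_r in H. lra.
Qed.
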